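(* The sequence $a_k := N_{k,1}$ satisfies $a_1=2$, $a_2=6$, $a_3=14$, and $a_k = 2a_{k-1}+a_{k-2}-2a_{k-3}$ for all $k\ge 4$.
   Context: A $2\times k$ Nurikabe rectangle is a water/land coloring of the $2\times k$ grid of unit squares (columns indexed $1,\dots,k$ from left to right, no identifications) such that the set of water squares is connected under edge-adjacency (empty set counts as connected) and there is no $2\times 2$ block of four water squares. $\mathcal N_{k,1}$ is the set of $2\times k$ Nurikabe rectangles with exactly one water square in column $k$, and $N_{k,1}=|\mathcal N_{k,1}|$. *)

(* Defs.v *)
From mathcomp Require Import all_boot.
Set Implicit Arguments. Unset Strict Implicit. Unset Printing Implicit Defensive.

(* A coloring of the 2 x k grid: cell (i, j), row i : 'I_2, column j : 'I_k
   (column j here is column j+1 of the paper); true = water, false = land. *)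
Definition coloring (k : nat) := {ffun 'I_2 * 'I_k -> bool}.

Definition adj (k : nat) : rel ('I_2 * 'I_k) :=
  fun x y =>
    ((x.1 == y.1) && ((x.2.+1 == y.2 :> nat) || (y.2.+1 == x.2 :> nat)))
    || ((x.2 == y.2) && (x.1 != y.1)).

Definition water_adj (k : nat) (f : coloring k) : rel ('I_2 * 'I_k) :=
  fun x y => [&& f x, f y & adj x y].

Definition water_connected (k : nat) (f : coloring k) : bool :=
  [forall x, forall y, (f x && f y) ==> connect (water_adj f) x y].

Definition no_water_pool (k : nat) (f : coloring k) : bool :=
  [forall j : 'I_k, forall j' : 'I_k, (j.+1 == j' :> nat) ==>
     ~~ [forall i : 'I_2, f (i, j) && f (i, j')]].

Definition nurikabe (k : nat) (f : coloring k) : bool :=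
  water_connected f && no_water_pool f.

Definition water_last_col (k : nat) (f : coloring k) : nat :=
  #|[set i : 'I_2 | [exists j : 'I_k, (val j == k.-1) && f (i, j)]]|.

Definition N_k1 (k : nat) : nat :=
  #|[set f : coloring k | nurikabe f && (water_last_col f == 1)]|.

(* Main.v *)
Require Import Defs.
From mathcomp Require Import all_boot all_algebra zify.
Set Implicit Arguments. Unset Strict Implicit. Unset Printing Implicit Defensive.
Import GRing.Theory.
Open Scope nat_scope.

Definition T := (bool * bool)%type.
Definition single (x : T) := x.1 != x.2.
Definition nonempty (x : T) := x.1 || x.2.
Definition link (x y : T) := ((x.1 && y.1) || (x.2 && y.2)) && ~~ [&& x.1, x.2, y.1 & y.2].
Fixpoint chain (x : T) (s : seq T) := if s is y :: s' then link x y && chain y s' else single x.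
Fixpoint good (s : seq T) := if s is x :: s' then (if nonempty x then chain x s' else good s') else false.

Lemma big_tuple_cons n (F : n.+1.-tuple T -> nat) :
  \sum_(t : n.+1.-tuple T) F t = \sum_(x : T) \sum_(t : n.-tuple T) F [tuple of x :: t].
Proof.
rewrite pair_big /=.
rewrite (reindex (fun p : T * n.-tuple T => [tuple of p.1 :: p.2])) //.
exists (fun t : n.+1.-tuple T => (thead t, [tuple of behead t])).
  by move=> [x t] _ /=; congr pair => //; apply: val_inj.
by move=> t _; rewrite [RHS]tuple_eta; apply: val_inj.
Qed.

Lemma sumT (F : T -> nat) : \sum_(x : T) F x = F (true,true) + F (true,false) + F (false,true) + F (false,false).
Proof.
transitivity (\sum_(a : bool) \sum_(b : bool) F (a,b)).
  by rewrite pair_big; apply: eq_bigr => -[].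
by rewrite !big_bool /= !addnA.
Qed.

Definition S n x := \sum_(t : n.-tuple T) chain x t.

Lemma S_rec n x : S n.+1 x = \sum_(y : T) link x y * S n y.
Proof.
rewrite /S big_tuple_cons; apply: eq_bigr => y _.
rewrite big_distrr /=; apply: eq_bigr => t _ /=.
by case: (link x y); rewrite ?mul1n ?mul0n.
Qed.

Lemma S0 x : S 0 x = single x.
Proof.
by rewrite /S (big_pred1 [tuple]) // => t /=; apply/esym/eqP; exact: tuple0.
Qed.

Lemma S_tot n : S n (true,false) + S n (false,true) + S n (true,true) = 2 ^ n.+1.
Proof.
elim: n => [|n IH].
  by rewrite !S0.
rewrite !S_rec !sumT /link /= expnS -IH.
rewrite !mul0n !mul1n !addn0 !add0n. lia.
Qed.

Definition Gs n := \sum_(t : n.-tuple T) good t.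

Lemma Gs_val n : Gs n = 2 ^ n.+1 - 2.
Proof.
elim: n => [|n IH].
  by rewrite /Gs (big_pred1 [tuple]) // => t /=; apply/esym/eqP; exact: tuple0.
rewrite /Gs big_tuple_cons sumT /=.
rewrite -/(Gs n) IH -/(S n (true,true)) -/(S n (true,false)) -/(S n (false,true)).
have := S_tot n. rewrite !expnS. lia.
Qed.

Lemma card_good n : #|[set t : n.-tuple T | good t]| = 2 ^ n.+1 - 2.
Proof.
rewrite -Gs_val -sum1dep_card big_mkcond /=; apply: eq_bigr => t _.
by case: (good t).
Qed.

Definition d0 : T := (false, false).
Definition IP (u : seq T) := single (nth d0 u (size u).-1) /\
  forall j, j.+1 < size u -> nonempty (nth d0 u j) -> link (nth d0 u j) (nth d0 u j.+1).

Lemma link_ne x y : link x y -> nonempty x /\ nonempty y.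
Proof. by case: x y => [[] []] [[] []]. Qed.

Lemma single_ne x : single x -> nonempty x.
Proof. by case: x => [[] []]. Qed.

Lemma chain_iff s x : chain x s <-> nonempty x /\ IP (x :: s).
Proof.
elim: s x => [|y s IH] x /=.
  split=> [h|[_ []] //]; split; first exact: single_ne.
  by split=> // j.
rewrite /IP /=; split.
  move=> /andP[lxy /IH [ny [sl H]]]; split; first by case: (link_ne lxy).
  split=> // -[|j] /= hj hn //.
  exact: H.
move=> [nx [sl H]]; have lxy := H 0 isT nx.
rewrite lxy /=; apply/IH; split; first by case: (link_ne lxy).
by split=> // j hj; apply: (H j.+1).
Qed.

Lemma good_iff s : good s <-> 0 < size s /\ IP s.
Proof.
elim: s => [|x s IH] /=; first by split=> [//|[]].
case: ifP => nx.
  rewrite chain_iff; split=> [[_ h]//|[_ h]//].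
rewrite IH; case: s IH => [|y s] IH /=.
  rewrite /IP /=; split=> [[]//|[_ [sx _]]].
  by move: (single_ne sx); rewrite nx.
rewrite /IP /=; split.
  move=> [_ [sl H]]; split=> //; split=> // -[|j] /= hj hn.
    by rewrite nx in hn.
  exact: H.
move=> [_ [sl H]]; split=> //; split=> // j hj.
exact: (H j.+1 hj).
Qed.

Definition r0 : 'I_2 := ord0.
Definition r1 : 'I_2 := ord_max.
Lemma I2P (i : 'I_2) : i = r0 \/ i = r1.
Proof. by case: i => [[|[|]]] // ?; [left|right]; apply: val_inj. Qed.

Section G.
Variables (k : nat) (f : coloring k).

Definition cs (o : 'I_k) : T := (f (r0, o), f (r1, o)).

Lemma wadj_sym : symmetric (water_adj f).
Proof.
move=> [x1 x2] [y1 y2]; rewrite /water_adj /adj /=.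
rewrite andbCA; congr andb; congr andb.
by rewrite (eq_sym y1) (eq_sym y2) [(y2.+1 == x2) || _]orbC.
Qed.

Lemma conn_sym : connect_sym (water_adj f).
Proof. exact/sym_connect_sym/wadj_sym. Qed.

Lemma link_of_conn (oj oj1 ol : 'I_k) i0 r :
  water_connected f -> nat_of_ord oj1 = (nat_of_ord oj).+1 -> nat_of_ord ol = k.-1 ->
  f (i0, oj) -> f (r, ol) -> exists i, f (i, oj) && f (i, oj1).
Proof.
move=> Hc e1 el fi0 fr.
case/boolP: [exists i, f (i, oj) && f (i, oj1)] => [/existsP //|/existsPn H]; exfalso.
pose a := [pred x : 'I_2 * 'I_k | x.2 <= oj].
have cl : closed (water_adj f) a.
  apply: (intro_closed conn_sym) => -[x1 x2] [y1 y2].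
  rewrite /water_adj /adj /= !inE /= => /and3P[fx fy].
  case/orP => [/andP[/eqP ex /orP[/eqP e2|/eqP e2]]|/andP[/eqP e2 _]].
  - have [exj|nexj] := eqVneq (nat_of_ord x2) (nat_of_ord oj).
      have ex2 : x2 = oj by apply: val_inj.
      have ey2 : y2 = oj1.
        by apply: val_inj => /=; lia.
      subst; move: (H y1); rewrite fx fy //.
    move=> hx; lia.
  - move=> hx; lia.
  - by rewrite -e2.
have := closed_connect cl.
move: Hc => /forallP/(_ (i0, oj))/forallP/(_ (r, ol)); rewrite fi0 fr /= => cn.
move=> /(_ _ _ cn); rewrite !inE /= leqnn.
have := ltn_ord oj1; lia.
Qed.

Lemma reach (ol : 'I_k) r :
  nat_of_ord ol = k.-1 -> single (cs ol) -> f (r, ol) ->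
  (forall oj oj1 : 'I_k, nat_of_ord oj1 = (nat_of_ord oj).+1 ->
     nonempty (cs oj) -> link (cs oj) (cs oj1)) ->
  forall n (x : 'I_2 * 'I_k), k.-1 - x.2 = n -> f x -> connect (water_adj f) x (r, ol).
Proof.
move=> el sl fr HL n; elim: n => [|n IH] [x1 x2] /= hn fx.
  have ex2 : x2 = ol by apply: val_inj => /=; have := ltn_ord x2; lia.
  subst x2.
  have -> : x1 = r.
    move: sl; rewrite /single /cs /=.
    by case: (I2P x1) fx => ->; case: (I2P r) fr => -> fr fx //; rewrite fr fx.
  exact: connect0.
have hk : x2.+1 < k by lia.
pose oj1 := Ordinal hk.
have : link (cs x2) (cs oj1).
  apply: HL => //; rewrite /nonempty /cs /=.
  by case: (I2P x1) fx => -> ->; rewrite ?orbT.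
case/andP => /orP hl _.
have [i [fi fi1]] : exists i, f (i, x2) /\ f (i, oj1).
  by case: hl => /andP[? ?]; [exists r0|exists r1].
apply: (connect_trans (y := (i, x2))).
  have [->|ne] := eqVneq x1 i; first exact: connect0.
  by apply: connect1; rewrite /water_adj /adj /= fx fi eqxx ne orbT.
apply: (connect_trans (y := (i, oj1))).
  by apply: connect1; rewrite /water_adj /adj /= fi fi1 !eqxx.
by apply: IH => //=; lia.
Qed.
End G.

Section C.
Variables (k : nat) (f : coloring k).

Definition colb i j := [exists o : 'I_k, (val o == j) && f (i, o)].
Definition colst j : T := (colb r0 j, colb r1 j).

Lemma colE (o : 'I_k) i : colb i o = f (i, o).
Proof.
apply/existsP/idP => [[o' /andP[/eqP e fo]]|fo]; last by exists o; rewrite eqxx.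
by rewrite -(val_inj e).
Qed.

Lemma colst_ord (o : 'I_k) : colst o = cs f o.
Proof. by rewrite /colst /cs !colE. Qed.

Lemma colb_k i j : colb i j -> j < k.
Proof. by move/existsP => [o /andP[/eqP <- _]]; exact: ltn_ord. Qed.

Lemma wlc : water_last_col f = colb r0 k.-1 + colb r1 k.-1.
Proof.
rewrite /water_last_col -sum1dep_card big_mkcond /=.
rewrite (bigD1 r0) // (bigD1 r1) // big1 /=.
  by rewrite addn0 -/(colb r0 k.-1) -/(colb r1 k.-1); case: (colb r0 _); case: (colb r1 _).
by move=> i; case: (I2P i) => ->.
Qed.

Definition CP := 0 < k /\ single (colst k.-1) /\
  forall j, j.+1 < k -> nonempty (colst j) -> link (colst j) (colst j.+1).

Lemma charP : nurikabe f && (water_last_col f == 1) <-> CP.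
Proof.
split.
  move/andP => [/andP[Hc Hp]]; rewrite wlc => Hw.
  have k0 : 0 < k.
    move: Hw; case: (boolP (colb r0 k.-1)) => [/colb_k|_]; first by lia.
    case: (boolP (colb r1 k.-1)) => [/colb_k|_] //; lia.
  have hl : k.-1 < k by lia.
  pose ol := Ordinal hl.
  have sl : single (colst k.-1).
    by move: Hw; rewrite /single /colst; case: (colb r0 _); case: (colb r1 _).
  have [r fr] : exists r, f (r, ol).
    move: sl; rewrite -[k.-1]/(nat_of_ord ol) colst_ord /single /cs.
    by case e0: (f (r0, ol)); [exists r0 | case e1: (f (r1, ol)) => //; exists r1].
  split=> //; split=> // j hj.
  have hj0 : j < k by lia.
  pose oj := Ordinal hj0; pose oj1 := Ordinal hj.
  rewrite -[j]/(nat_of_ord oj) -[j.+1]/(nat_of_ord oj1) !colst_ord => ne.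
  have [i0 fi0] : exists i0, f (i0, oj).
    by move: ne; rewrite /nonempty /cs /= => /orP[]; [exists r0 | exists r1].
  have [i /andP[a b]] := link_of_conn (oj := oj) (oj1 := oj1) (ol := ol) Hc erefl erefl fi0 fr.
  apply/andP; split.
    by case: (I2P i) a b => -> a b; rewrite /cs /= a b ?orbT.
  move: Hp => /forallP/(_ oj)/forallP/(_ oj1)/implyP/(_ (eqxx _)) Hp.
  apply/negP; rewrite /cs /= => /and4P[a0 a1 b0 b1]; apply: (negP Hp); apply/forallP => i1.
  by case: (I2P i1) => ->; rewrite /= ?a0 ?a1 ?b0 ?b1.
move=> [k0 [sl HL]].
have hl : k.-1 < k by lia.
pose ol := Ordinal hl.
have sl' : single (cs f ol) by rewrite -colst_ord.
have [r fr] : exists r, f (r, ol).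
  move: sl'; rewrite /single /cs.
  by case e0: (f (r0, ol)); [exists r0 | case e1: (f (r1, ol)) => //; exists r1].
have HL' : forall oj oj1 : 'I_k, nat_of_ord oj1 = (nat_of_ord oj).+1 ->
     nonempty (cs f oj) -> link (cs f oj) (cs f oj1).
  move=> oj oj1 e; rewrite -!colst_ord e; apply: HL; rewrite -e; exact: ltn_ord.
apply/andP; split; first (apply/andP; split).
- apply/forallP => x; apply/forallP => y; apply/implyP => /andP[fx fy].
  apply: (connect_trans (reach (ol := ol) (r := r) erefl sl' fr HL' erefl fx)).
  rewrite conn_sym; exact: (reach (ol := ol) (r := r) erefl sl' fr HL' erefl fy).
- apply/forallP => oj; apply/forallP => oj1; apply/implyP => /eqP e.
  apply/negP => /forallP H.
  have /andP[a0 b0] := H r0; have /andP[a1 b1] := H r1.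
  by move: (HL' oj oj1 (esym e)); rewrite /cs /nonempty /link /= a0 a1 b0 b1 => /(_ isT).
- rewrite wlc; move: sl; rewrite /single /colst.
  by case: (colb r0 _); case: (colb r1 _).
Qed.

Definition phi : k.-tuple T := [tuple colst i | i < k].

Lemma nth_phi j : nth d0 phi j = colst j.
Proof.
case: (ltnP j k) => hj.
  by rewrite -[j]/(nat_of_ord (Ordinal hj)) nth_mktuple.
rewrite nth_default ?size_tuple // /colst.
case: (boolP (colb r0 j)) => [/colb_k|_]; first by lia.
case: (boolP (colb r1 j)) => [/colb_k|_] //; lia.
Qed.

Lemma P_good : nurikabe f && (water_last_col f == 1) = good phi.
Proof.
apply/idP/idP.
  move/charP => [k0 [sl H]]; apply/good_iff; rewrite size_tuple; split=> //.
  split; first by rewrite size_tuple nth_phi.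
  by move=> j; rewrite size_tuple !nth_phi; apply: H.
move/good_iff; rewrite size_tuple => -[k0 [sl H]]; apply/charP.
split=> //; split; first by move: sl; rewrite size_tuple nth_phi.
by move=> j hj; rewrite -!nth_phi; apply: H; rewrite size_tuple.
Qed.
End C.

Definition psi k (t : k.-tuple T) : coloring k :=
  [ffun p : 'I_2 * 'I_k => if p.1 == r0 then (tnth t p.2).1 else (tnth t p.2).2].

Lemma phi_psi k : cancel (@psi k) (@phi k).
Proof.
move=> t; apply: eq_from_tnth => i; rewrite tnth_mktuple colst_ord /cs !ffunE /=.
by case: (tnth t i).
Qed.

Lemma psi_phi k : cancel (@phi k) (@psi k).
Proof.
move=> f; apply/ffunP => -[i j]; rewrite ffunE tnth_mktuple colst_ord /cs /=.
by case: (I2P i) => ->.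
Qed.

Lemma N_val k : N_k1 k = 2 ^ k.+1 - 2.
Proof.
rewrite /N_k1 -card_good.
have -> : [set f : coloring k | nurikabe f && (water_last_col f == 1)] =
          (@psi k) @: [set t : k.-tuple T | good t].
  apply/setP => f; rewrite inE; apply/idP/imsetP.
    by rewrite P_good => g; exists (phi f); rewrite ?inE ?psi_phi.
  by move=> [t]; rewrite inE => gt ->; rewrite P_good phi_psi.
by rewrite card_imset //; apply: can_inj (@phi_psi k).
Qed.

Local Open Scope ring_scope.

Theorem lemma3p2 :
  [/\ N_k1 1 = 2%N, N_k1 2 = 6%N, N_k1 3 = 14%N &
      forall k : nat, (4 <= k)%N ->
        (N_k1 k)%:Z = 2 * (N_k1 (k - 1)%N)%:Z + (N_k1 (k - 2)%N)%:Z - 2 * (N_k1 (k - 3)%N)%:Z].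
Proof.
split; rewrite ?N_val //.
move=> k hk; rewrite !N_val.
have [m ->] : exists m, k = (m + 4)%N by exists (k - 4)%N; lia.
have -> : (m + 4 - 1 = m + 3)%N by lia.
have -> : (m + 4 - 2 = m + 2)%N by lia.
have -> : (m + 4 - 3 = m + 1)%N by lia.
rewrite !addnS !addn0 !expnS.
have := expn_gt0 2 m; set p := (2 ^ m)%N => hp.
lia.
Qed.
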